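(* Let $K$ be a number field, $X/K$ a smooth projective variety with $\dim X\ge1$, and $f:X\to X$ a morphism defined over $K$. Suppose that (i) $X_f^{\mathrm{dense}}(K)\ne\emptyset$; (ii) every complete set of representatives for $X(K)/\equiv_f$ is Zariski dense in $X$; and (iii) $X_f^{\mathrm{dense}}$ contains a non-empty Zariski open subset of $X$. Then $X_f^{\mathrm{dense}}(K)\ne\emptyset$ and every complete set of representatives for $X_f^{\mathrm{dense}}(K)/\equiv_f$ is Zariski dense in $X$.
   Context: $\mathcal{O}_f(P)=\{f^n(P):n\ge 0\}$. $P\equiv_f Q$ means $\mathcal{O}_f(P)\cap\mathcal{O}_f(Q)\ne\emptyset$ (an equivalence relation). $X_f^{\mathrm{dense}}$ is the set of points with Zariski dense $f$-orbit and $X_f^{\mathrm{dense}}(K)=X_f^{\mathrm{dense}}\cap X(K)$. For $S\subseteq X(K)$, a complete set of representatives for $S/\equiv_f$ is a subset of $S$ containing exactly one point of each $\equiv_f$-class that meets $S$. *)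

(* Defs.v *)
(* Classical (Hartshorne ch. I style) projective varieties
   over algC (= an algebraic closure of Q), with Zariski topology given by
   homogeneous multivariate polynomials (multinomials' mpoly). *)
From HB Require Import structures.
From mathcomp Require Import all_boot all_order all_algebra all_field.
From mathcomp Require Import mpoly.

Set Implicit Arguments.
Unset Strict Implicit.
Unset Printing Implicit Defensive.

Import Order.TTheory GRing.Theory Num.Theory.
Local Open Scope ring_scope.

Definition is_number_field (K : algC -> Prop) : Prop :=
  [/\ K 0, K 1,
      (forall x y, K x -> K y -> K (x - y)),
      (forall x y, K x -> K y -> K (x * y)) &
      (forall x, K x -> x != 0 -> K x^-1)] /\
      (exists s : seq algC, forall x, K x ->
        exists c : 'I_(size s) -> rat, x = \sum_(i < size s) ratr (c i) * s`_i).

(* a point of P^N is represented by its unique normalized homogeneous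
   coordinate vector: first nonzero coordinate equal to 1 *)
Definition normalized (N : nat) (v : {ffun 'I_N.+1 -> algC}) : bool :=
  [exists i, (v i == 1) && [forall j : 'I_N.+1, (j < i)%N ==> (v j == 0)]].

Definition proj (N : nat) := {v : {ffun 'I_N.+1 -> algC} | normalized v}.

Definition coords (N : nat) (P : proj N) : 'I_N.+1 -> algC := fun i => (val P) i.

Definition hpoly (N : nat) (p : {mpoly algC[N.+1]}) : Prop :=
  exists d : nat, p \is d.-homog.

Definition rational_pt (K : algC -> Prop) (N : nat) (P : proj N) : Prop :=
  forall i, K (coords P i).

Definition zclosed (N : nat) (Z : proj N -> Prop) : Prop :=
  exists S : {mpoly algC[N.+1]} -> Prop,
    (forall p, S p -> hpoly p) /\
    (forall P, Z P <-> (forall p, S p -> (p.@[coords P]) = 0)).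

Definition zclosed_over (K : algC -> Prop) (N : nat) (Z : proj N -> Prop) : Prop :=
  exists S : {mpoly algC[N.+1]} -> Prop,
    (forall p, S p -> hpoly p /\ forall m, K (p@_m)) /\
    (forall P, Z P <-> (forall p, S p -> (p.@[coords P]) = 0)).

Definition subset_of (N : nat) (A B : proj N -> Prop) : Prop :=
  forall P, A P -> B P.

Definition open_in (N : nat) (X U : proj N -> Prop) : Prop :=
  subset_of U X /\
  exists Z, zclosed Z /\ forall P, U P <-> (X P /\ ~ Z P).

Definition zdense_in (N : nat) (X S : proj N -> Prop) : Prop :=
  subset_of S X /\
  forall Z, zclosed Z -> subset_of S Z -> subset_of X Z.

Definition irreducible_closed (N : nat) (X : proj N -> Prop) : Prop :=
  [/\ zclosed X, exists P, X P &
      forall Z1 Z2, zclosed Z1 -> zclosed Z2 ->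
        (forall P, X P -> Z1 P \/ Z2 P) -> subset_of X Z1 \/ subset_of X Z2].

Definition irr_chain (N : nat) (X : proj N -> Prop) (d : nat)
    (Z : nat -> proj N -> Prop) : Prop :=
  (forall k, (k <= d)%N -> irreducible_closed (Z k) /\ subset_of (Z k) X) /\
  (forall k, (k < d)%N ->
     subset_of (Z k) (Z k.+1) /\ ~ subset_of (Z k.+1) (Z k)).

Definition dim_eq (N : nat) (X : proj N -> Prop) (d : nat) : Prop :=
  (exists Z, irr_chain X d Z) /\ (forall Z, ~ irr_chain X d.+1 Z).

Definition in_ideal (N : nat) (X : proj N -> Prop) (p : {mpoly algC[N.+1]}) : Prop :=
  hpoly p /\ forall P, X P -> p.@[coords P] = 0.

Definition jacobian (N k : nat) (ps : 'I_k -> {mpoly algC[N.+1]}) (P : proj N)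
  : 'M[algC]_(k, N.+1) :=
  \matrix_(i < k, j < N.+1) ((ps i)^`M(j)).@[coords P].

(* Jacobian criterion: at every point the gradients of the homogeneous
   ideal span a space of dimension exactly N - dim X *)
Definition smooth (N : nat) (X : proj N -> Prop) : Prop :=
  exists d, dim_eq X d /\
  forall P, X P ->
    (exists k (ps : 'I_k -> {mpoly algC[N.+1]}),
        (forall i, in_ideal X (ps i)) /\ (N - d <= \rank (jacobian ps P))%N) /\
    (forall k (ps : 'I_k -> {mpoly algC[N.+1]}),
        (forall i, in_ideal X (ps i)) -> (\rank (jacobian ps P) <= N - d)%N).

Definition smooth_proj_variety (K : algC -> Prop) (N : nat) (X : proj N -> Prop)
  : Prop :=
  [/\ zclosed_over K X, irreducible_closed X & smooth X].

Definition dim_ge1 (N : nat) (X : proj N -> Prop) : Prop :=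
  exists Z, irr_chain X 1 Z.

Definition morphism_over (K : algC -> Prop) (N : nat) (X : proj N -> Prop)
    (f : proj N -> proj N) : Prop :=
  (forall P, X P -> X (f P)) /\
  forall P, X P ->
    exists (d : nat) (F : 'I_N.+1 -> {mpoly algC[N.+1]}) (V : proj N -> Prop),
      [/\ (forall i, F i \is d.-homog /\ forall m, K ((F i)@_m)),
          open_in X V, V P &
          forall Q, V Q -> exists2 c : algC, c != 0 &
            forall i, (F i).@[coords Q] = c * coords (f Q) i].

Definition orbit (N : nat) (f : proj N -> proj N) (P : proj N) : proj N -> Prop :=
  fun Q => exists n, Q = iter n f P.

Definition orb_equiv (N : nat) (f : proj N -> proj N) (P Q : proj N) : Prop :=
  exists m n, iter m f P = iter n f Q.

Definition Xdense (N : nat) (X : proj N -> Prop) (f : proj N -> proj N) : proj N -> Prop :=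
  fun P => X P /\ zdense_in X (orbit f P).

Definition complete_reps (N : nat) (f : proj N -> proj N) (S R : proj N -> Prop) : Prop :=
  [/\ subset_of R S,
      (forall P, S P -> exists Q, R Q /\ orb_equiv f Q P) &
      (forall Q1 Q2, R Q1 -> R Q2 -> orb_equiv f Q1 Q2 -> Q1 = Q2)].

(* Main.v *)
Require Import Defs.
From mathcomp Require Import all_boot all_order all_algebra all_field.
From mathcomp Require Import mpoly.
From Stdlib Require Import Classical ClassicalEpsilon FunctionalExtensionality PropExtensionality.

Import GRing.Theory.
Local Open Scope ring_scope.

Lemma zclosedU (N : nat) (Z1 Z2 : proj N -> Prop) :
  zclosed Z1 -> zclosed Z2 -> zclosed (fun P => Z1 P \/ Z2 P).
Proof.
move=> [S1 [H1 E1]] [S2 [H2 E2]].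
exists (fun r => exists p q, [/\ S1 p, S2 q & r = p * q]); split.
  move=> r [p [q [Sp Sq ->]]].
  have [d Hd] := H1 p Sp; have [e He] := H2 q Sq.
  exists (d + e)%N; exact: dhomogM.
move=> P; split.
  move=> [Z1P|Z2P] r [p [q [Sp Sq ->]]]; rewrite mevalM.
    by rewrite (proj1 (E1 P) Z1P p Sp) mul0r.
  by rewrite (proj1 (E2 P) Z2P q Sq) mulr0.
move=> Hall.
destruct (classic (Z1 P)) as [h|h]; first by left.
right; apply/(E2 P) => q Sq.
have [p [Sp np]] : exists p, S1 p /\ p.@[coords P] <> 0.
  apply: NNPP => Hn; apply: h; apply/(E1 P) => p Sp.
  by apply: NNPP => np; apply: Hn; exists p.
have := Hall (p * q) (ex_intro _ p (ex_intro _ q (And3 Sp Sq erefl))).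
rewrite mevalM => /eqP; rewrite mulf_eq0 => /orP [/eqP//|/eqP//].
Qed.

Section Equiv.
Variables (N : nat) (f : proj N -> proj N).

Lemma oe_refl P : orb_equiv f P P.
Proof. by exists 0%N, 0%N. Qed.

Lemma oe_sym P Q : orb_equiv f P Q -> orb_equiv f Q P.
Proof. by move=> [m [n e]]; exists n, m. Qed.

Lemma oe_trans P Q T : orb_equiv f P Q -> orb_equiv f Q T -> orb_equiv f P T.
Proof.
move=> [a [b e1]] [c [d e2]]; exists (c + a)%N, (b + d)%N.
by rewrite !iterD e1 -iterD addnC iterD e2 -iterD addnC.
Qed.
End Equiv.
Arguments oe_refl {N f P}.
Arguments oe_sym {N f P Q}.
Arguments oe_trans {N f P Q T}.

Theorem lemmaB3 (K : algC -> Prop) (N : nat) (X : proj N -> Prop)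
    (f : proj N -> proj N) :
  is_number_field K ->
  smooth_proj_variety K X ->
  dim_ge1 X ->
  morphism_over K X f ->
  (* (i) *) (exists P, Xdense X f P /\ rational_pt K P) ->
  (* (ii) *) (forall R, complete_reps f (fun P => X P /\ rational_pt K P) R ->
                zdense_in X R) ->
  (* (iii) *) (exists U, open_in X U /\ (exists P, U P) /\ subset_of U (Xdense X f)) ->
  (exists P, Xdense X f P /\ rational_pt K P) /\
  (forall R, complete_reps f (fun P => Xdense X f P /\ rational_pt K P) R ->
     zdense_in X R).
Proof.
move=> _ [_ Xirr _] _ _ Hi Hii [U [[UX [ZU [ZUc EU]]] [[P0 UP0] UD]]].
split=> // R [RS Rcov Runi].
pose C P := fun Q => (X Q /\ rational_pt K Q) /\ orb_equiv f Q P.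
have inh : inhabited (proj N) by constructor; exact: P0.
pose c P := epsilon inh (C P).
have cC P : C P P -> C P (c P).
  by move=> h; apply: (epsilon_spec inh (C P)); exists P.
have Ceq P Q : orb_equiv f P Q -> C P = C Q.
  move=> e; apply: functional_extensionality => T; apply: propositional_extensionality.
  rewrite /C; split=> [[h1 h2]|[h1 h2]]; split=> //.
    exact: oe_trans h2 e.
  exact: oe_trans h2 (oe_sym e).
pose meets P := exists T, (Xdense X f T /\ rational_pt K T) /\ orb_equiv f T P.
pose S P := (X P /\ rational_pt K P) /\ ~ meets P /\ P = c P.
pose R' P := R P \/ S P.
have RX : subset_of R X by move=> P /RS [[]].
have R'c : complete_reps f (fun P => X P /\ rational_pt K P) R'.
  split.
  - move=> P [/RS [[XP _] rP]|[h _]] //.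
  - move=> P SP.
    destruct (classic (meets P)) as [[T [DT eT]]|nm].
      have [Q [RQ eQ]] := Rcov T DT.
      by exists Q; split; [left|exact: oe_trans eQ eT].
    have CP : C P P by split=> //; exact: oe_refl.
    have [h1 h2] := cC P CP.
    exists (c P); split=> //; right; split=> //; split.
      move=> [T [DT eT]]; apply: nm; exists T; split=> //; exact: oe_trans eT h2.
    by rewrite /c (Ceq _ _ h2).
  - move=> Q1 Q2 [R1|[S1 [m1 e1]]] [R2|[S2 [m2 e2]]] e.
    + exact: Runi.
    + by exfalso; apply: m2; exists Q1; split=> //; exact: RS.
    + by exfalso; apply: m1; exists Q2; split; [exact: RS|exact: oe_sym].
    + by rewrite e1 e2 /c (Ceq _ _ e).
split=> // Z Zc RZ.
have Wc := @zclosedU _ _ _ Zc ZUc.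
have [_ dR'] := Hii R' R'c.
have XW : subset_of X (fun P => Z P \/ ZU P).
  apply: dR' => // P [/RZ|[[XP rP] [nm _]]]; first by left.
  right; apply: NNPP => nZ.
  have UP : U P by apply/EU.
  by apply: nm; exists P; split; [split=> //; exact: UD|exact: oe_refl].
case: Xirr => _ _ Hirr.
case: (Hirr _ _ Zc ZUc XW) => // XZU.
by exfalso; have [_ h] := proj1 (EU P0) UP0; apply: h; apply: XZU; apply: UX.
Qed.
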